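(* Let $G$ be a graph and $(x,y)\in E(G)$ with $d_x=d_y=d$. Let $\Delta_G(x,y)=N_G(x)\cap N_G(y)$, $Q_G(x)=N_G(x)\setminus\Delta_G(x,y)$ and $Q_G(y)=N_G(y)\setminus\Delta_G(x,y)$. Then $\kappa(x,y)=\frac{|\Delta_G(x,y)|}{d}$ if and only if there is a perfect matching between $Q_G(x)$ and $Q_G(y)$, i.e. a bijection $\sigma:Q_G(x)\to Q_G(y)$ with $(a,\sigma(a))\in E(G)$ for all $a\in Q_G(x)$.
   Context: Graphs are locally finite and unweighted. $d_G$ is the shortest-path metric, $N_G(v)$ the neighbour set and $d_v$ the degree of $v$; $m_v$ is the uniform probability measure on $N_G(v)$, and for an edge $(x,y)$, $\kappa(x,y)=1-W_1(m_x,m_y)$, where $W_1$ is the Wasserstein-1 (transportation) distance with respect to $d_G$. Note that $y\in Q_G(x)$ and $x\in Q_G(y)$. *)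

(* Defs.v *)
From HB Require Import structures.
From mathcomp Require Import all_boot all_order all_algebra.
From mathcomp Require Import all_classical all_reals ereal.
Set Implicit Arguments. Unset Strict Implicit. Unset Printing Implicit Defensive.
Import Order.TTheory GRing.Theory Num.Theory.
Local Open Scope ring_scope.
Local Open Scope classical_set_scope.

(* A locally finite simple (unweighted, undirected, loopless) graph on a vertex
   type T is given by its neighbour lists nbr v = N_G(v) (finite by construction). *)
Definition simple_graph (T : eqType) (nbr : T -> seq T) : Prop :=
  [/\ forall v, uniq (nbr v),
      forall u v, (v \in nbr u) = (u \in nbr v)
    & forall v, v \notin nbr v].

Definition adj (T : eqType) (nbr : T -> seq T) : rel T := fun u v => v \in nbr u.

Definition deg (T : eqType) (nbr : T -> seq T) (v : T) : nat := size (nbr v).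

(* shortest-path metric d_G(u,v) in \bar R (+oo if no path) *)
Definition gdist (R : realType) (T : eqType) (nbr : T -> seq T) (u v : T) : \bar R :=
  ereal_inf [set ((size p)%:R)%:E | p in [set p : seq T | path (adj nbr) u p /\ last u p = v]].

Definition unif_nbr (R : realType) (T : eqType) (nbr : T -> seq T) (v : T) : T -> R :=
  fun a => if a \in nbr v then (deg nbr v)%:R^-1 else 0.

Definition coupling (R : realType) (T : eqType) (s t : seq T) (mu nu : T -> R)
  (pi : T -> T -> R) : Prop :=
  [/\ forall a b, 0 <= pi a b,
      forall a b, (a \notin s) || (b \notin t) -> pi a b = 0,
      forall a, a \in s -> \sum_(b <- t) pi a b = mu a
    & forall b, b \in t -> \sum_(a <- s) pi a b = nu b].

Definition W1 (R : realType) (T : eqType) (d : T -> T -> \bar R)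
  (s t : seq T) (mu nu : T -> R) : \bar R :=
  ereal_inf [set (\sum_(a <- s) \sum_(b <- t) (pi a b)%:E * d a b)%E
            | pi in [set pi | coupling s t mu nu pi]].

Definition kappa (R : realType) (T : eqType) (nbr : T -> seq T) (x y : T) : \bar R :=
  (1 - W1 (@gdist R T nbr) (nbr x) (nbr y) (unif_nbr R nbr x) (unif_nbr R nbr y))%E.

Definition Delta (T : eqType) (nbr : T -> seq T) (x y : T) : seq T :=
  [seq a <- nbr x | a \in nbr y].
Definition Q (T : eqType) (nbr : T -> seq T) (x y : T) : seq T :=
  [seq a <- nbr x | a \notin nbr y].

(* Main.v *)
Require Import Defs.
From HB Require Import structures.
From mathcomp Require Import all_boot all_order all_algebra.
Set Implicit Arguments. Unset Strict Implicit. Unset Printing Implicit Defensive.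

Section Hall.
Variables (TA TB : finType) (r : TA -> TB -> bool) (bdef : TB).
Definition NB (B : {set TB}) (S : {set TA}) := [set b in B | [exists a in S, r a b]].

Lemma hall_gen n : forall (A : {set TA}) (B : {set TB}), #|A| <= n ->
  (forall S : {set TA}, S \subset A -> #|S| <= #|NB B S|) ->
  exists f : TA -> TB, {in A, forall a, f a \in B /\ r a (f a)} /\ {in A &, injective f}.
Proof.
elim: n => [|n IH] A B hA hH.
  exists (fun _ => bdef); move: hA; rewrite leqn0 cards_eq0 => /eqP ->.
  by split => a; rewrite inE.
have [->|nA0] := eqVneq A set0.
  by exists (fun _ => bdef); split => a; rewrite inE.
case: (boolP [exists S : {set TA}, [&& S \subset A, S != set0, S != A & #|NB B S| <= #|S|]]).
- case/existsP => S /and4P [sSA nS0 nSA tS].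
  have ltS : #|S| < #|A| by apply: proper_card; rewrite properEneq nSA.
  have [f1 [f1B f1i]] : exists f : TA -> TB, {in S, forall a, f a \in NB B S /\ r a (f a)} /\ {in S &, injective f}.
    apply: IH; first by rewrite -ltnS (leq_trans ltS).
    move=> T sTS; have -> : NB (NB B S) T = NB B T.
      apply/setP => b; rewrite !inE; apply/andP/andP => [[/andP [-> _] ->]|[hb /existsP [a /andP [aT rab]]]] //.
      split; last by apply/existsP; exists a; rewrite aT.
      by rewrite hb; apply/existsP; exists a; rewrite rab (subsetP sTS _ aT).
    by apply: hH; apply: subset_trans sTS sSA.
  set NS := NB B S.
  have [f2 [f2B f2i]] : exists f : TA -> TB, {in A :\: S, forall a, f a \in B :\: NS /\ r a (f a)} /\ {in A :\: S &, injective f}.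
    apply: IH.
      rewrite -ltnS; apply: leq_trans hA; rewrite cardsD.
      rewrite (setIidPr sSA) ltn_subrL; apply/andP; split; last by apply: leq_ltn_trans ltS; done.
      by rewrite card_gt0.
    move=> T sTAS.
    have hTS : T :&: S = set0.
      by apply/setP => a; rewrite !inE; apply/andP => -[aT aS]; move: (subsetP sTAS a aT); rewrite inE aS.
    have := hH (T :|: S); rewrite subUset sSA andbT.
    have -> : T \subset A by apply: subset_trans sTAS (subsetDl _ _).
    move=> /(_ isT); rewrite cardsU hTS cards0 subn0.
    have -> : NB B (T :|: S) = NB (B :\: NS) T :|: NS.
      apply/setP => b; rewrite !inE; case: (b \in B) => //=; rewrite ?andbF //.
      case: (boolP [exists a in S, r a b]) => hS; rewrite ?orbT ?orbF //=.
        by apply/existsP; case/existsP: hS => a /andP [aS rab]; exists a; rewrite inE aS orbT.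
      apply/existsP/existsP => [[a /andP [/setUP [aT|aS] rab]]|[a /andP [aT rab]]].
      - by exists a; rewrite aT.
      - by case/negP: hS; apply/existsP; exists a; rewrite aS.
      - by exists a; rewrite inE aT.
    move=> h; have h2 := leq_trans h (leq_card_setU _ _).1.
    by rewrite -(leq_add2r #|S|); apply: leq_trans h2 _; rewrite leq_add2l.
  exists (fun a => if a \in S then f1 a else f2 a); split.
    move=> a aA; case: ifP => aS.
      by have [] := f1B a aS; rewrite inE => /andP [-> _] ->.
    have aAS : a \in A :\: S by rewrite inE aS aA.
    by have [] := f2B a aAS; rewrite inE => /andP [_ ->] ->.
  move=> a1 a2 a1A a2A; case: ifP => a1S; case: ifP => a2S.
  - by apply: f1i.
  - move=> e; have [] := f1B a1 a1S; rewrite e => h _.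
    have aAS : a2 \in A :\: S by rewrite inE a2S a2A.
    by have [] := f2B a2 aAS; rewrite inE h.
  - move=> e; have [] := f1B a2 a2S; rewrite -e => h _.
    have aAS : a1 \in A :\: S by rewrite inE a1S a1A.
    by have [] := f2B a1 aAS; rewrite inE h.
  - by apply: f2i; rewrite inE ?a1S ?a2S.
- rewrite negb_exists => /forallP ntight.
  have [a0 a0A] := set0Pn _ nA0.
  have : 0 < #|NB B [set a0]|.
    by apply: leq_trans (hH [set a0] _); rewrite ?cards1 // sub1set.
  rewrite card_gt0 => /set0Pn [b0 hb0].
  move: hb0; rewrite inE => /andP [b0B /existsP [a /andP [+ rab]]]; rewrite inE => /eqP ea; subst a.
  have [f' [f'B f'i]] : exists f : TA -> TB, {in A :\ a0, forall a, f a \in B :\ b0 /\ r a (f a)} /\ {in A :\ a0 &, injective f}.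
    apply: IH.
      by rewrite -ltnS; apply: leq_trans hA; rewrite (cardsD1 a0 A) a0A.
    move=> T sT; have [->|nT0] := eqVneq T set0; first by rewrite cards0.
    have sTA : T \subset A by apply: subset_trans sT (subsetDl _ _).
    have nTA : T != A.
      by apply/eqP => eTA; move: (subsetP sT a0); rewrite eTA a0A !inE eqxx => /(_ isT).
    have := ntight T; rewrite sTA nT0 nTA /= -ltnNge => lt.
    have -> : NB (B :\ b0) T = NB B T :\ b0.
      by apply/setP => b; rewrite !inE andbA.
    rewrite -ltnS; apply: leq_trans lt _; rewrite (cardsD1 b0 (NB B T)).
    by case: (b0 \in NB B T).
  exists (fun a => if a == a0 then b0 else f' a); split.
    move=> a aA; case: eqP => [->//|/eqP na].
    have aA' : a \in A :\ a0 by rewrite !inE na aA.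
    by have [] := f'B a aA'; rewrite !inE => /andP [_ ->] ->.
  move=> a1 a2 a1A a2A; case: eqP => [->|/eqP n1]; case: eqP => [->|/eqP n2] //.
  - move=> e; have aA' : a2 \in A :\ a0 by rewrite !inE n2 a2A.
    by have [] := f'B a2 aA'; rewrite -e !inE eqxx.
  - move=> e; have aA' : a1 \in A :\ a0 by rewrite !inE n1 a1A.
    by have [] := f'B a1 aA'; rewrite e !inE eqxx.
  - by apply: f'i; rewrite !inE ?n1 ?n2 ?a1A ?a2A.
Qed.
End Hall.

From mathcomp Require Import all_classical all_reals ereal.
From mathcomp Require Import zify ring lra.
From Stdlib Require Import Lia.
Import Order.TTheory GRing.Theory Num.Theory.
Local Open Scope ring_scope.

Lemma count_card (T : eqType) (p : pred T) (x0 : T) (s : seq T) n :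
  size s = n -> count p s = #|[set i : 'I_n | p (nth x0 s i)]|.
Proof.
move=> <-; rewrite cardE /enum_mem -enumT size_filter.
rewrite -{1}(mkseq_nth x0 s) /mkseq -val_enum_ord -map_comp count_map.
by apply: eq_count => i /=; rewrite inE.
Qed.

Lemma sum_ind (R : numDomainType) (I : Type) (s : seq I) (p : pred I) :
  \sum_(i <- s) ((p i)%:R : R) = (count p s)%:R.
Proof.
elim: s => [|a s IH]; first by rewrite big_nil.
by rewrite big_cons IH /= natrD.
Qed.

Lemma count_mem_sym (T : eqType) (s1 s2 : seq T) : uniq s1 -> uniq s2 ->
  count (mem s2) s1 = count (mem s1) s2.
Proof.
move=> u1 u2; rewrite -!size_filter; apply: perm_size; apply: uniq_perm.
- exact: filter_uniq.
- exact: filter_uniq.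
- by move=> z; rewrite !mem_filter andbC.
Qed.

Lemma count_or (T : Type) (p q : pred T) (s : seq T) :
  count (fun z => p z || q z) s = (count p s + count (fun z => q z && ~~ p z) s)%N.
Proof.
elim: s => [|a s IH] //=; rewrite IH; case: (p a); case: (q a) => /=; lia.
Qed.

Section Gdist.
Variables (R : realType) (T : eqType) (nbr : T -> seq T).

Lemma gdist_ge0 a b : (0 <= gdist R nbr a b)%E.
Proof. by apply: le_ereal_inf_tmp => _ [p _ <-]; rewrite lee_fin. Qed.

Lemma gdist_ge1 a b : a != b -> (1 <= gdist R nbr a b)%E.
Proof.
move=> nab; apply: le_ereal_inf_tmp => _ [p [hp hl] <-]; rewrite lee_fin.
case: p hp hl => [_ /= eab|z p _ _]; first by rewrite eab eqxx in nab.
by rewrite ler1n.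
Qed.

Lemma gdist_ge2 a b : a != b -> ~~ adj nbr a b -> (2%:E <= gdist R nbr a b)%E.
Proof.
move=> nab nadj; apply: le_ereal_inf_tmp => _ [p [hp hl] <-]; rewrite lee_fin.
case: p hp hl => [_ /= eab|z [|z' p] hp hl]; first by rewrite eab eqxx in nab.
  by move: hp hl => /= /andP [hz _] ezb; rewrite -ezb hz in nadj.
by rewrite ler_nat.
Qed.

Lemma gdist_self a : (gdist R nbr a a <= 0)%E.
Proof. by apply: ereal_inf_lbound; exists [::]. Qed.

Lemma gdist_adj a b : adj nbr a b -> (gdist R nbr a b <= 1)%E.
Proof. by move=> h; apply: ereal_inf_lbound; exists [:: b] => //=; rewrite h. Qed.
End Gdist.

Section Dual.
Variables (R : realType) (T : eqType) (nbr : T -> seq T) (x y : T).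

Lemma W1_dual (f g : T -> R) :
  (forall a b, a \in nbr x -> b \in nbr y -> ((f a - g b)%:E <= gdist R nbr a b)%E) ->
  ((\sum_(a <- nbr x) f a * unif_nbr R nbr x a - \sum_(b <- nbr y) g b * unif_nbr R nbr y b)%:E
   <= W1 (@gdist R T nbr) (nbr x) (nbr y) (unif_nbr R nbr x) (unif_nbr R nbr y))%E.
Proof.
move=> hfg; apply: le_ereal_inf_tmp => _ [pi [h0 hsupp hr hc] <-].
have -> : \sum_(a <- nbr x) f a * unif_nbr R nbr x a - \sum_(b <- nbr y) g b * unif_nbr R nbr y b
  = \sum_(a <- nbr x) \sum_(b <- nbr y) pi a b * (f a - g b).
  under [RHS]eq_bigr => a _ do under eq_bigr => b _ do rewrite mulrBr.
  under [RHS]eq_bigr => a _ do rewrite sumrB.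
  rewrite sumrB; congr (_ - _).
    rewrite big_seq [RHS]big_seq; apply: eq_bigr => a ha.
    by rewrite -hr // mulr_sumr; apply: eq_bigr => b _; rewrite mulrC.
  rewrite exchange_big /= [LHS]big_seq [RHS]big_seq; apply: eq_bigr => b hb.
  by rewrite -hc // mulr_sumr; apply: eq_bigr => a _; rewrite mulrC.
rewrite -sumEFin big_seq [X in (_ <= X)%E]big_seq; apply: lee_sum => a ha.
rewrite -sumEFin big_seq [X in (_ <= X)%E]big_seq; apply: lee_sum => b hb.
by rewrite EFinM; apply: lee_wpmul2l; [rewrite lee_fin|apply: hfg].
Qed.
End Dual.

Section Spec.
Variables (R : realType) (T : eqType) (nbr : T -> seq T) (x y : T).

Lemma sum_unif (F : T -> R) v :
  \sum_(a <- nbr v) F a * unif_nbr R nbr v a = (\sum_(a <- nbr v) F a) / (deg nbr v)%:R.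
Proof.
by rewrite mulr_suml big_seq [RHS]big_seq; apply: eq_bigr => a ha; rewrite /unif_nbr ha.
Qed.

Lemma sum_one (s : seq T) : \sum_(a <- s) (1 : R) = (size s)%:R.
Proof. by have := sum_ind R s predT; rewrite count_predT /= => <-; apply: eq_bigr. Qed.

Lemma W1_lbS (d : nat) (S : pred T) : deg nbr x = d -> deg nbr y = d ->
  (((d%:R + (count S (Q nbr x y))%:R
    - (count (fun b => (b \in nbr x) || has (fun a => S a && adj nbr a b) (Q nbr x y)) (nbr y))%:R)
    / d%:R)%:E
   <= W1 (@gdist R T nbr) (nbr x) (nbr y) (unif_nbr R nbr x) (unif_nbr R nbr y))%E.
Proof.
move=> hdx hdy.
set g := fun b => (((b \in nbr x) || has (fun a => S a && adj nbr a b) (Q nbr x y)) : nat)%:R : R.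
set f := fun a => 1 + ((S a && (a \notin nbr y)) : nat)%:R : R.
apply: le_trans (@W1_dual R T nbr x y f g _); last first.
  move=> a b ha hb; have [eab|nab] := eqVneq a b.
    subst b; rewrite /f /g ha hb /= andbF addr0 subrr; exact: gdist_ge0.
  case hSa: (S a && (a \notin nbr y)).
    case hg: ((b \in nbr x) || has (fun a => S a && adj nbr a b) (Q nbr x y)).
      rewrite /f /g hSa hg; apply: le_trans (gdist_ge1 R nbr nab).
      by rewrite lee_fin /= ?mulr1n ?mulr0n; lra.
    rewrite /f /g hSa hg; apply: le_trans (@gdist_ge2 R T nbr _ _ nab _).
      by rewrite lee_fin /= ?mulr1n ?mulr0n; lra.
    apply/negP => hab; move/negbT: hg; rewrite negb_or => /andP [_ /negP]; apply.
    apply/hasP; exists a; last by move: hSa => /andP [-> _].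
    by rewrite mem_filter; move: hSa => /andP [_ ->].
  rewrite /f hSa; apply: le_trans (gdist_ge1 R nbr nab).
  rewrite lee_fin /g /= mulr0n; by have := ler0n R ((b \in nbr x) || has (fun a => S a && adj nbr a b) (Q nbr x y)); lra.
rewrite lee_fin le_eqVlt; apply/orP; left; apply/eqP.
rewrite !sum_unif hdx hdy -mulrBl; congr (_ / _).
rewrite /f /g big_split /= sum_one sum_ind sum_ind -hdx /deg.
by rewrite /Q count_filter.
Qed.
End Spec.

Lemma sum_ind_div (R : numFieldType) (I : Type) (s : seq I) (p : pred I) (c : R) :
  \sum_(i <- s) ((p i)%:R / c) = (count p s)%:R / c.
Proof. by rewrite -sum_ind mulr_suml. Qed.

Section Ub.
Variables (R : realType) (T : eqType) (nbr : T -> seq T) (x y : T).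
Hypothesis G : simple_graph nbr.

Lemma W1_ub (d : nat) (sigma : T -> T) : deg nbr x = d -> deg nbr y = d ->
  {in Q nbr x y &, injective sigma} ->
  {in Q nbr x y, forall a, sigma a \in Q nbr y x} ->
  {in Q nbr y x, forall b, exists2 a, a \in Q nbr x y & sigma a = b} ->
  {in Q nbr x y, forall a, adj nbr a (sigma a)} ->
  (W1 (@gdist R T nbr) (nbr x) (nbr y) (unif_nbr R nbr x) (unif_nbr R nbr y)
   <= ((size (Q nbr x y))%:R / d%:R)%:E)%E.
Proof.
move=> hdx hdy sinj sQ ssurj sadj.
have [uniqG symG irrG] := G.
set pi := fun a b => if a \in nbr x then
   ((if a \in nbr y then a == b else sigma a == b) : nat)%:R / d%:R else 0 : R.
have hQx a : (a \in Q nbr x y) = (a \notin nbr y) && (a \in nbr x) by rewrite mem_filter.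
have hQy b : (b \in Q nbr y x) = (b \notin nbr x) && (b \in nbr y) by rewrite mem_filter.
have cpl : coupling (nbr x) (nbr y) (unif_nbr R nbr x) (unif_nbr R nbr y) pi.
  split.
  - move=> a b; rewrite /pi; case: ifP => // _; apply: divr_ge0; exact: ler0n.
  - move=> a b /orP [ha|hb]; rewrite /pi; first by rewrite (negbTE ha).
    case: ifP => // ha; case: ifP => hay.
      by case: eqP => [eab|]; [subst b; rewrite hay in hb|rewrite mul0r].
    case: eqP => [esb|]; last by rewrite mul0r.
    have : a \in Q nbr x y by rewrite hQx hay ha.
    by move/sQ; rewrite hQy esb (negbTE hb) andbF.
  - move=> a ha; rewrite /unif_nbr ha hdx.
    rewrite /pi ha /= (sum_ind_div _ (fun b => if a \in nbr y then a == b else sigma a == b)).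
    suff -> : count (fun b => if a \in nbr y then a == b else sigma a == b) (nbr y) = 1%N by rewrite mul1r.
    case hay: (a \in nbr y).
      by have := count_uniq_mem a (uniqG y); rewrite hay /= => <-; apply: eq_count => b /=; rewrite eq_sym.
    have hs : sigma a \in nbr y.
      have : a \in Q nbr x y by rewrite hQx hay ha.
      by move/sQ; rewrite hQy => /andP [].
    by have := count_uniq_mem (sigma a) (uniqG y); rewrite hs /= => <-; apply: eq_count => b /=; rewrite eq_sym.
  - move=> b hb; rewrite /unif_nbr hb hdy.
    rewrite big_seq; under eq_bigr => a ha do rewrite /pi ha.
    rewrite -big_seq (sum_ind_div _ (fun a => if a \in nbr y then a == b else sigma a == b)).
    suff -> : count (fun a => if a \in nbr y then a == b else sigma a == b) (nbr x) = 1%N by rewrite mul1r.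
    case hbx: (b \in nbr x).
      have := count_uniq_mem b (uniqG x); rewrite hbx /= => <-; apply: eq_in_count => a ha /=.
      case: ifP => hay //.
      have -> : (a == b) = false by apply/eqP => e; subst b; rewrite hb in hay.
      apply/eqP => esb; have : a \in Q nbr x y by rewrite hQx hay ha.
      by move/sQ; rewrite hQy esb hbx.
    have [a0 ha0 sa0] : exists2 a, a \in Q nbr x y & sigma a = b by apply: ssurj; rewrite hQy hbx hb.
    have uQ : uniq (Q nbr x y) by apply: filter_uniq.
    have := count_uniq_mem a0 uQ; rewrite ha0 /= => <-; rewrite /Q count_filter; apply: eq_in_count => a ha /=.
    case hay: (a \in nbr y) => /=.
      have -> : (a == b) = false by apply/eqP => eab; move: hbx; rewrite -eab ha.
      by rewrite andbF.
    rewrite andbT; have haQ : a \in Q nbr x y by rewrite hQx hay ha.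
    apply/eqP/eqP => [esb|ea]; last by rewrite ea.
    by apply: sinj => //; rewrite esb sa0.
apply: ge_ereal_inf; exists (\sum_(a <- nbr x) \sum_(b <- nbr y) (pi a b)%:E * gdist R nbr a b)%E.
  by exists pi.
apply: (@le_trans _ _ (\sum_(a <- nbr x) \sum_(b <- nbr y) (pi a b * ((a \notin nbr y) : nat)%:R)%:E)%E).
  rewrite big_seq [X in (_ <= X)%E]big_seq; apply: lee_sum => a ha.
  rewrite big_seq [X in (_ <= X)%E]big_seq; apply: lee_sum => b hb.
  have [p0|pn0] := eqVneq (pi a b) 0; first by rewrite p0 mul0e mul0r.
  rewrite EFinM; apply: lee_wpmul2l; first by rewrite lee_fin /pi ha; apply: divr_ge0; exact: ler0n.
  move: pn0; rewrite /pi ha; case: ifP => hay /=.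
    have [eab|nab] := eqVneq a b; last by rewrite mul0r eqxx.
    by move=> _; subst b; rewrite ?hay /= ?mulr0n; exact: gdist_self.
  have [esb|nsb] := eqVneq (sigma a) b; last by rewrite mul0r eqxx.
  by move=> _; rewrite ?hay /= ?mulr1n -esb; apply: gdist_adj; apply: sadj; rewrite hQx hay ha.
under eq_bigr do rewrite sumEFin.
rewrite sumEFin lee_fin le_eqVlt; apply/orP; left; apply/eqP.
rewrite big_seq; under eq_bigr => a ha.
  rewrite -mulr_suml.
  have -> : \sum_(i <- nbr y) pi a i = (deg nbr x)%:R^-1.
    have [_ _ hr _] := cpl; by rewrite hr // /unif_nbr ha.
  over.
rewrite -big_seq /= -mulr_sumr mulrC hdx sum_ind /Q size_filter.
by congr (_ / _); congr (_%:R); apply: eq_count.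
Qed.
End Ub.

Unset Implicit Arguments. Set Strict Implicit. Set Printing Implicit Defensive.

Theorem theorem4p2 (R : realType) (T : eqType) (nbr : T -> seq T)
  (G : simple_graph nbr) (x y : T) (d : nat)
  (hxy : adj nbr x y) (hdx : deg nbr x = d) (hdy : deg nbr y = d) :
  kappa R nbr x y = ((size (Delta nbr x y))%:R / d%:R)%:E <->
  exists sigma : T -> T,
    [/\ {in Q nbr x y &, injective sigma},
        {in Q nbr x y, forall a, sigma a \in Q nbr y x},
        {in Q nbr y x, forall b, exists2 a, a \in Q nbr x y & sigma a = b}
      & {in Q nbr x y, forall a, adj nbr a (sigma a)}].
Proof.
have [uniqG symG irrG] := G.
set Qx := Q nbr x y; set Qy := Q nbr y x.
set nD := size (Delta nbr x y); set nQ := size Qx.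
have hyx : x \in nbr y by rewrite -symG.
have dpos : (0 < d)%N by rewrite -hdx /deg; move: hxy; rewrite /adj; case: (nbr x).
have hQD : (nQ + nD = d)%N.
  by rewrite /nQ /nD /Qx /Q /Delta !size_filter addnC count_predC -hdx.
have hcnt : count (fun b => b \in nbr x) (nbr y) = nD.
  by rewrite /nD /Delta size_filter (count_mem_sym (uniqG y) (uniqG x)).
have hQy : size Qy = nQ.
  have : (size Qy + nD = d)%N.
    by rewrite /Qy /Q size_filter -hcnt addnC count_predC -hdy.
  lia.
set W := W1 (@gdist R T nbr) (nbr x) (nbr y) (unif_nbr R nbr x) (unif_nbr R nbr y).
have dR : (d%:R : R) != 0 by rewrite pnatr_eq0 -lt0n.
have hval : (nD%:R / d%:R : R) = 1 - nQ%:R / d%:R.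
  by rewrite -hQD natrD in dR *; field.
have hkW : kappa R nbr x y = ((nD%:R / d%:R : R))%:E <-> W = (nQ%:R / d%:R)%:E.
  rewrite /kappa -/W hval; split.
    by case: W => [w| |] //= [] h; congr (_%:E); lra.
  by move=> ->.
rewrite hkW.
have W0 : (W <= (nQ%:R / d%:R)%:E -> W = (nQ%:R / d%:R)%:E)%E.
  move=> hle; apply/eqP; rewrite eq_le hle /=.
  have := @W1_lbS R T nbr x y d pred0 hdx hdy.
  rewrite (_ : count pred0 _ = 0%N) ?count_pred0 // addr0.
  rewrite (eq_count (a2 := fun b => b \in nbr x)); last first.
    by move=> b /=; case: hasP => [[a _ //]|_]; rewrite orbF.
  by rewrite hcnt -hQD natrD addrK.
split; last first.
  move=> [sigma [h1 h2 h3 h4]]; apply: W0.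
  exact: (@W1_ub R T nbr x y G d sigma hdx hdy h1 h2 h3 h4).
move=> hW.
have uQx : uniq Qx by apply: filter_uniq.
have uQy : uniq Qy by apply: filter_uniq.
have yQx : y \in Qx by rewrite mem_filter irrG /=; exact: hxy.
have nQpos : (0 < nQ)%N by rewrite /nQ; case: (Qx) yQx.
pose i0 : 'I_nQ := Ordinal nQpos.
pose r := fun (i j : 'I_nQ) => adj nbr (nth x Qx i) (nth x Qy j).
case: (boolP [forall S : {set 'I_nQ}, (#|S| <= #|NB r [set: 'I_nQ]%SET S|)%N]) => [/forallP hH|].
  have [f [fr finj]] : exists f : 'I_nQ -> 'I_nQ,
      {in [set: 'I_nQ]%SET, forall a, f a \in [set: 'I_nQ] /\ r a (f a)} /\ {in [set: 'I_nQ]%SET &, injective f}.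
    by apply: (@hall_gen _ _ r i0 nQ); [rewrite cardsT card_ord|move=> S _; apply: hH].
  have finj' : injective f by move=> i j; apply: finj; rewrite inE.
  have [g fK gK] := injF_bij finj'.
  pose ia := fun a => insubd i0 (index a Qx).
  have hia a : a \in Qx -> val (ia a) = index a Qx.
    by move=> ha; rewrite val_insubd index_mem ha.
  have nia a : a \in Qx -> nth x Qx (ia a) = a.
    by move=> ha; rewrite hia // nth_index.
  exists (fun a => nth x Qy (f (ia a))); split.
  - move=> a1 a2 h1 h2 /eqP; rewrite nth_uniq ?hQy // => /eqP /val_inj /finj'.
    by move=> e; rewrite -(nia _ h1) -(nia _ h2) e.
  - by move=> a ha; apply: mem_nth; rewrite hQy.
  - move=> b hb; pose j := insubd i0 (index b Qy).
    have hj : val j = index b Qy by rewrite val_insubd (_ : (index b Qy < nQ)%N) // -hQy index_mem.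
    exists (nth x Qx (g j)); first by apply: mem_nth.
    have -> : ia (nth x Qx (g j)) = g j.
      by apply: val_inj; rewrite hia ?mem_nth // index_uniq.
    by rewrite gK hj nth_index.
  - move=> a ha; have iT : ia a \in [set: 'I_nQ]%SET by rewrite inE.
    have [_ ] := fr (ia a) iT.
    by rewrite /r nia.
rewrite negb_forall => /existsP [S]; rewrite -ltnNge => hS.
pose Sp := fun a => [exists i in S, nth x Qx i == a].
have hcS : count Sp Qx = #|S|.
  rewrite (count_card Sp x (erefl (size Qx))); apply: eq_card => i; rewrite inE /Sp.
  apply/existsP/idP => [[i' /andP [i'S /eqP e]]|iS]; last by exists i; rewrite iS eqxx.
  move/eqP: e; rewrite nth_uniq // => /eqP /val_inj <-; exact: i'S.
set H := fun b => has (fun a => Sp a && adj nbr a b) Qx.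
have hcH : count H Qy = #|NB r [set: 'I_nQ]%SET S|.
  rewrite (count_card H x hQy); apply: eq_card => j; rewrite !inE /H.
  apply/hasP/existsP => [[a ha /andP [/existsP [i /andP [iS /eqP ei]] hadj]]|[i /andP [iS rij]]].
    by exists i; rewrite iS /r ei.
  exists (nth x Qx i); first by apply: mem_nth.
  apply/andP; split; last exact: rij.
  by apply/existsP; exists i; rewrite iS eqxx.
have := @W1_lbS R T nbr x y d Sp hdx hdy.
rewrite -/Qx -/W hW lee_fin count_or hcnt.
have -> : count (fun z => H z && (z \notin nbr x)) (nbr y) = count H Qy.
  by rewrite /Qy /Q count_filter.
rewrite hcS hcH -hQD !natrD => hle.
have hSR : (#|NB r [set: 'I_nQ]%SET S|%:R + 1 <= (#|S|%:R : R)).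
  by rewrite natr1 ler_nat.
have dpR : (0 : R) < nQ%:R + nD%:R by rewrite -natrD hQD ltr0n.
move: hle; rewrite ler_pM2r ?invr_gt0 // => hle.
move: hle hSR; move: #|S| #|NB r [set: 'I_nQ]%SET S| => p q h1 h2; exfalso; move: h1 h2; clear; move=> h1 h2; lra.
Qed.
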